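(* Let $r$ be a positive real number such that $1, r, r^2, r^3$ are linearly independent over $\mathbb{Q}$, and let $\Lambda \subset \mathbb{C}^2$ be the lattice generated by the column vectors of the period matrix $$P = \begin{pmatrix} 1 & 0 & \sqrt{-1}\,r^3 & r \\ 0 & 1 & r & \sqrt{-1} \end{pmatrix}.$$ Then the $2$-dimensional complex torus $\mathbb{A} = \mathbb{C}^2/\Lambda$ is a simple abelian variety.
   Context: An abelian variety is a complex torus admitting a positive line bundle (equivalently a polarization). An abelian variety is simple if it contains no complex subtorus other than $0$ and itself; for a $2$-dimensional torus this means it contains no $1$-dimensional complex subtorus. *)

(* Defs.v *)
From HB Require Import structures.
From mathcomp Require Import all_boot all_order all_algebra.
From mathcomp Require Import complex.
From mathcomp Require Import reals.
Set Implicit Arguments. Unset Strict Implicit. Unset Printing Implicit Defensive.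
Import Order.TTheory GRing.Theory Num.Theory.
Local Open Scope ring_scope.
Local Open Scope complex_scope.

Definition period_matrix (R : realType) (r : R) : 'M[R[i]]_(2, 4) :=
  \matrix_(i < 2, j < 4)
    [fun k : 'I_4 =>
       if i == 0 :> nat then
         [:: 1; 0; 'i * (r ^+ 3)%:C; r%:C]`_k
       else
         [:: 0; 1; r%:C; 'i]`_k] j.

Definition in_lattice (R : realType) (n : nat) (P : 'M[R[i]]_(2, n))
    (v : 'cV[R[i]]_2) : Prop :=
  exists k : 'I_n -> int, v = \sum_(j < n) (k j)%:~R *: col j P.

(* The columns of P are linearly independent over R, so that Lambda is a
   lattice (discrete, of full rank 2n = 4 in C^2 = R^4) and C^2/Lambda is
   a complex torus. *)
Definition columns_R_independent (R : realType) (n : nat)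
    (P : 'M[R[i]]_(2, n)) : Prop :=
  forall t : 'I_n -> R,
    \sum_(j < n) (t j)%:C *: col j P = 0 -> forall j, t j = 0.

Definition herm_form (R : realType) (H : 'M[R[i]]_2) (v w : 'cV[R[i]]_2)
  : R[i] :=
  \sum_(a < 2) \sum_(b < 2) ((v a 0)^* * H a b * w b 0).

(* A polarization (Riemann form) on C^2/Lambda: a positive definite Hermitian
   form H whose imaginary part takes integer values on Lambda x Lambda.
   This is the first Chern class of a positive (ample) line bundle
   (Appell-Humbert); its existence is equivalent to the torus admitting a
   positive line bundle. *)
Definition has_polarization (R : realType) (n : nat) (P : 'M[R[i]]_(2, n))
  : Prop :=
  exists H : 'M[R[i]]_2,
    (forall a b, H b a = (H a b)^*) /\
    (forall v : 'cV[R[i]]_2, v != 0 -> 0 < herm_form H v v) /\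
    (forall l m : 'cV[R[i]]_2, in_lattice P l -> in_lattice P m ->
       exists z : int, Im (herm_form H l m) = z%:~R).

(* C^2/Lambda contains a 1-dimensional complex subtorus: there is a complex
   line C w (w <> 0) such that (C w) /\ Lambda contains two R-linearly
   independent vectors, i.e. (C w) /\ Lambda is a lattice in C w and
   (C w)/((C w) /\ Lambda) is a closed 1-dimensional complex subtorus. *)
Definition has_1dim_subtorus (R : realType) (n : nat) (P : 'M[R[i]]_(2, n))
  : Prop :=
  exists (w : 'cV[R[i]]_2) (a b : R[i]),
    w != 0 /\ in_lattice P (a *: w) /\ in_lattice P (b *: w) /\
    (forall s t : R, s%:C * a + t%:C * b = 0 -> s = 0 /\ t = 0).

(* C^2/Lambda is a simple abelian variety (of dimension 2): it is a complex
   torus (Lambda a lattice), it admits a polarization, and it contains no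
   complex subtorus other than 0 and itself (for dimension 2: no
   1-dimensional complex subtorus). *)
Definition simple_abelian_surface (R : realType) (P : 'M[R[i]]_(2, 4))
  : Prop :=
  columns_R_independent P /\ has_polarization P /\ ~ has_1dim_subtorus P.

(* Main.v *)
Require Import Defs.
From HB Require Import structures.
From mathcomp Require Import all_boot all_order all_algebra.
From mathcomp Require Import complex.
From mathcomp Require Import reals.
From mathcomp Require Import ring lra.
Import Order.TTheory GRing.Theory Num.Theory.
Local Open Scope ring_scope.
Local Open Scope complex_scope.

Notation o0 := (ord0 : 'I_4).
Notation o1 := (lift ord0 ord0 : 'I_4).
Notation o2 := (lift ord0 (lift ord0 ord0) : 'I_4).
Notation o3 := (lift ord0 (lift ord0 (lift ord0 ord0)) : 'I_4).

Lemma ord4P (P : 'I_4 -> Prop) : P o0 -> P o1 -> P o2 -> P o3 -> forall j, P j.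
Proof.
move=> H0 H1 H2 H3 [[|[|[|[|n]]]] Hj] //.
- by rewrite (_ : Ordinal Hj = o0) //; apply: val_inj.
- by rewrite (_ : Ordinal Hj = o1) //; apply: val_inj.
- by rewrite (_ : Ordinal Hj = o2) //; apply: val_inj.
- by rewrite (_ : Ordinal Hj = o3) //; apply: val_inj.
Qed.

Section H.
Variable R : realType.
Variable r : R.
Definition lat (k : 'I_4 -> int) : 'cV[R[i]]_2 :=
  \sum_(j < 4) (k j)%:~R *: col j (period_matrix r).
Definition E0 (c : 'I_4 -> R) : R[i] := (c o0 + c o3 * r) +i* (c o2 * r^+3).
Definition E1 (c : 'I_4 -> R) : R[i] := (c o1 + c o2 * r) +i* c o3.

Lemma intrC (z : int) : (z%:~R : R[i]) = (z%:~R : R) +i* 0.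
Proof. by rewrite -(rmorph_int (real_complex R)). Qed.

Lemma latE0 k : lat k ord0 0 = E0 (fun j => (k j)%:~R).
Proof.
rewrite /lat summxE !big_ord_recl big_ord0 !mxE /= !intrC /E0.
by apply/eqP; rewrite eq_complex /=; apply/andP; split; apply/eqP; ring.
Qed.

Lemma latE1 k : lat k (lift ord0 ord0) 0 = E1 (fun j => (k j)%:~R).
Proof.
rewrite /lat summxE !big_ord_recl big_ord0 !mxE /= !intrC /E1.
by apply/eqP; rewrite eq_complex /=; apply/andP; split; apply/eqP; ring.
Qed.

Lemma E0lin (s t : R) c d : s%:C * E0 c + t%:C * E0 d = E0 (fun l => s * c l + t * d l).
Proof.
by rewrite /E0; apply/eqP; rewrite eq_complex /=; apply/andP; split; apply/eqP; ring.
Qed.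
Lemma E1lin (s t : R) c d : s%:C * E1 c + t%:C * E1 d = E1 (fun l => s * c l + t * d l).
Proof.
by rewrite /E1; apply/eqP; rewrite eq_complex /=; apply/andP; split; apply/eqP; ring.
Qed.
Lemma E0_0 c : (forall l, c l = 0) -> E0 c = 0.
Proof. by move=> h; rewrite /E0 !h; apply/eqP; rewrite eq_complex /= !(mul0r, addr0) eqxx. Qed.
Lemma E1_0 c : (forall l, c l = 0) -> E1 c = 0.
Proof. by move=> h; rewrite /E1 !h; apply/eqP; rewrite eq_complex /= !(mul0r, addr0) eqxx. Qed.

End H.

Lemma part1 (R : realType) (r : R) (hr : 0 < r) : columns_R_independent (period_matrix r).
Proof.
move=> t Ht.
have h0 := congr1 (fun M : 'cV[R[i]]_2 => M ord0 0) Ht.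
have h1 := congr1 (fun M : 'cV[R[i]]_2 => M (lift ord0 ord0) 0) Ht.
rewrite /= summxE !big_ord_recl big_ord0 !mxE /= in h0.
rewrite /= summxE !big_ord_recl big_ord0 !mxE /= in h1.
move/eqP: h0; rewrite eq_complex /= => /andP [/eqP a0 /eqP b0].
move/eqP: h1; rewrite eq_complex /= => /andP [/eqP a1 /eqP b1].
have r3 : 0 < r ^+ 3 by rewrite exprn_gt0.
have t2z : t o2 = 0.
  have : t o2 * r ^+ 3 = 0 by lra.
  by move/eqP; rewrite mulf_eq0 (gt_eqF r3) orbF => /eqP.
have t3z : t o3 = 0 by lra.
rewrite t2z t3z in a0 a1.
apply: ord4P => //; lra.
Qed.

Lemma part2 (R : realType) (r : R) (hr : 0 < r) : has_polarization (period_matrix r).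
Proof.
pose H : 'M[R[i]]_2 := \matrix_(a < 2, b < 2)
  ((if (a == b) && (a == 0 :> nat) then r ^- 3 else if a == b then 1 else 0) +i* 0).
have r3 : 0 < r ^+ 3 by rewrite exprn_gt0.
have c0 : 0 < r ^- 3 by rewrite invr_gt0.
exists H; split; [|split].
- move=> a b; rewrite !mxE /=; apply/eqP; rewrite eq_complex /= oppr0 eqxx andbT.
  case: (eqVneq a b) => [->|ne]; first by rewrite eqxx.
  by rewrite /= eqxx.
- move=> v vnz; rewrite /herm_form !big_ord_recl !big_ord0 !mxE /=.
  case E0: (v ord0 0) => [x0 y0]; case E1: (v (lift ord0 ord0) 0) => [x1 y1] /=.
  have nz : 0 < x0 ^+ 2 + y0 ^+ 2 + x1 ^+ 2 + y1 ^+ 2.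
    rewrite lt_neqAle; apply/andP; split; last by nra.
    apply: contra vnz => /eqP h0.
    have [z0 [z1 [z2 z3]]] : x0 = 0 /\ y0 = 0 /\ x1 = 0 /\ y1 = 0 by nra.
    apply/eqP/matrixP => i j; rewrite !mxE (ord1 j).
    case: i => [[|[|n]] Hi] //.
    + by rewrite (_ : Ordinal Hi = ord0) ?E0 ?z0 ?z1 //; apply: val_inj.
    + by rewrite (_ : Ordinal Hi = lift ord0 ord0) ?E1 ?z2 ?z3 //; apply: val_inj.
  rewrite ltcE /=; apply/andP; split.
    apply/eqP; ring.
  set c := (r ^+ 3)^-1 in c0 *.
  have hA : 0 <= x0 ^+ 2 + y0 ^+ 2 by nra.
  have hB : 0 <= x1 ^+ 2 + y1 ^+ 2 by nra.
  case: (lerP c 1) => hc; nra.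
move=> l m [k ->] [n ->].
change (\sum_(j<4) (k j)%:~R *: col j (period_matrix r)) with (lat _ r k).
change (\sum_(j<4) (n j)%:~R *: col j (period_matrix r)) with (lat _ r n).
exists (k o0 * n o2 - k o2 * n o0 + k o1 * n o3 - k o3 * n o1).
rewrite /herm_form !big_ord_recl !big_ord0 !mxE /= !latE0 !latE1 /E0 /E1 /=.
rewrite -complexIm intrC.
apply/eqP; rewrite eq_complex /= eqxx andbT; apply/eqP.
rewrite !(intrD, intrB, intrM, intrN).
field.
by rewrite gt_eqF.
Qed.

Lemma part3 (R : realType) (r : R) (hr : 0 < r)
  (hind : forall q : 'I_4 -> rat,
     \sum_(k < 4) ratr (q k) * r ^+ k = 0 -> forall k, q k = 0) :
  ~ has_1dim_subtorus (period_matrix r).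
Proof.
move=> [w [a [b [wnz [[k Hk] [[n Hn] hab]]]]]].
change (\sum_(j<4) (k j)%:~R *: col j (period_matrix r)) with (lat _ r k) in Hk.
change (\sum_(j<4) (n j)%:~R *: col j (period_matrix r)) with (lat _ r n) in Hn.
pose K := fun j => ((k j)%:~R : R).
pose N := fun j => ((n j)%:~R : R).
have u0 : a * w ord0 0 = E0 _ r K.
  by have := congr1 (fun M : 'cV[R[i]]_2 => M ord0 0) Hk; rewrite /= mxE latE0.
have u1 : a * w (lift ord0 ord0) 0 = E1 _ r K.
  by have := congr1 (fun M : 'cV[R[i]]_2 => M (lift ord0 ord0) 0) Hk; rewrite /= mxE latE1.
have v0 : b * w ord0 0 = E0 _ r N.
  by have := congr1 (fun M : 'cV[R[i]]_2 => M ord0 0) Hn; rewrite /= mxE latE0.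
have v1 : b * w (lift ord0 ord0) 0 = E1 _ r N.
  by have := congr1 (fun M : 'cV[R[i]]_2 => M (lift ord0 ord0) 0) Hn; rewrite /= mxE latE1.
have det : E0 _ r K * E1 _ r N = E1 _ r K * E0 _ r N.
  by rewrite -u0 -u1 -v0 -v1; ring.
move/eqP: det; rewrite /E0 /E1 eq_complex /= => /andP [/eqP D1 /eqP D2].
pose p := fun i j => k i * n j - k j * n i.
pose q1 := fun j : 'I_4 => [:: (p o0 o1)%:~R; (p o0 o2 - p o1 o3)%:~R;
                             (- p o2 o3)%:~R; (- p o2 o3)%:~R]`_j : rat.
pose q2 := fun j : 'I_4 => [:: (p o0 o3)%:~R; 0; 0; (- p o1 o2)%:~R]`_j : rat.
rewrite /K /N in D1 D2.
have h1 : forall j, q1 j = 0.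
  apply: hind; rewrite !big_ord_recl big_ord0 /q1 /p /= !ratr_int.
  rewrite !(intrD, intrB, intrM, intrN).
  move/eqP: D1; rewrite -subr_eq0 => /eqP D1.
  rewrite -[RHS]D1; ring.
have h2 : forall j, q2 j = 0.
  apply: hind; rewrite !big_ord_recl big_ord0 /q2 /p /= ?ratr_int ?rmorph0.
  rewrite !(intrD, intrB, intrM, intrN).
  move/eqP: D2; rewrite -subr_eq0 => /eqP D2.
  rewrite -[RHS]D2; ring.
have Z : forall z : int, (z%:~R : rat) = 0 -> z = 0.
  by move=> z /eqP; rewrite intr_eq0 => /eqP.
have P01 : p o0 o1 = 0 by apply: Z; exact: (h1 o0).
have P0213 : p o0 o2 - p o1 o3 = 0 by apply: Z; exact: (h1 o1).
have P23 : p o2 o3 = 0.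
  by apply: Z; rewrite -[RHS]oppr0 -(h1 o2) /q1 /= intrN opprK.
have P03 : p o0 o3 = 0 by apply: Z; exact: (h2 o0).
have P12 : p o1 o2 = 0.
  by apply: Z; rewrite -[RHS]oppr0 -(h2 o3) /q2 /= intrN opprK.
have pl : p o0 o2 * p o1 o3 = p o0 o1 * p o2 o3 + p o0 o3 * p o1 o2.
  by rewrite /p; ring.
have P13 : p o1 o3 = p o0 o2.
  by apply/eqP; rewrite eq_sym -subr_eq0 P0213.
have P02 : p o0 o2 = 0.
  move: pl; rewrite P01 P03 P13 !mul0r addr0 => /eqP.
  by rewrite mulf_eq0 orbb => /eqP.
rewrite P02 in P13.
have psym : forall i j, p i j = - p j i by move=> i j; rewrite /p opprB.
have Pz : forall i j, p i j = 0.
  apply: ord4P; apply: ord4P;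
  solve [ rewrite /p subrr // | rewrite ?(P01, P02, P03, P12, P13, P23) //
        | rewrite psym ?(P01, P02, P03, P12, P13, P23) ?oppr0 // ].
have Q : forall j l, N j * K l - K j * N l = 0.
  move=> j l; have := congr1 (fun z : int => (z%:~R : R)) (Pz j l).
  rewrite /= intrB !intrM /K /N => h; lra.
have wnz' : (w ord0 0 != 0) || (w (lift ord0 ord0) 0 != 0).
  move: wnz; apply: contraR; rewrite negb_or !negbK => /andP [/eqP z0 /eqP z1].
  apply/eqP/matrixP => i j; rewrite !mxE (ord1 j).
  case: i => [[|[|?]] Hi] //.
  + by rewrite (_ : Ordinal Hi = ord0) //; apply: val_inj.
  + by rewrite (_ : Ordinal Hi = lift ord0 ord0) //; apply: val_inj.
have key : forall s t : R, (forall l, s * K l + t * N l = 0) ->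
    s%:C * a + t%:C * b = 0.
  move=> s t hc; case/orP: wnz' => hw.
  + have : (s%:C * a + t%:C * b) * w ord0 0 = 0.
      rewrite mulrDl -!mulrA u0 v0 E0lin; apply: E0_0 => l; exact: hc.
    by move/eqP; rewrite mulf_eq0 (negbTE hw) orbF => /eqP.
  + have : (s%:C * a + t%:C * b) * w (lift ord0 ord0) 0 = 0.
      rewrite mulrDl -!mulrA u1 v1 E1lin; apply: E1_0 => l; exact: hc.
    by move/eqP; rewrite mulf_eq0 (negbTE hw) orbF => /eqP.
pose S := K o0 ^+ 2 + K o1 ^+ 2 + K o2 ^+ 2 + K o3 ^+ 2.
case: (eqVneq S 0) => hS.
  have Kz : forall j, K j = 0.
    have h0 : 0 <= K o0 ^+ 2 by rewrite sqr_ge0.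
    have h1' : 0 <= K o1 ^+ 2 by rewrite sqr_ge0.
    have h2' : 0 <= K o2 ^+ 2 by rewrite sqr_ge0.
    have h3 : 0 <= K o3 ^+ 2 by rewrite sqr_ge0.
    by rewrite /S in hS; apply: ord4P; nra.
  have hc : forall l, 1 * K l + 0 * N l = 0 by move=> l; rewrite Kz; ring.
  have [] := hab 1 0 (key 1 0 hc).
  by move=> /eqP; rewrite oner_eq0.
pose s := K o0 * N o0 + K o1 * N o1 + K o2 * N o2 + K o3 * N o3.
have hc : forall l, s * K l + - S * N l = 0.
  move=> l.
  have -> : s * K l + - S * N l = K o0 * (N o0 * K l - K o0 * N l) +
     K o1 * (N o1 * K l - K o1 * N l) + K o2 * (N o2 * K l - K o2 * N l) +
     K o3 * (N o3 * K l - K o3 * N l) by rewrite /s /S; ring.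
  by rewrite !Q; ring.
have [_ ht] := hab s (- S) (key s (- S) hc).
have : S = 0 by rewrite -[S]opprK ht oppr0.
by move/eqP; rewrite (negbTE hS).
Qed.

Theorem lemma2 (R : realType) (r : R) (hr : 0 < r)
  (hind : forall q : 'I_4 -> rat,
     \sum_(k < 4) ratr (q k) * r ^+ k = 0 -> forall k, q k = 0) :
  simple_abelian_surface (period_matrix r).
Proof.
split; first exact: part1.
split; first exact: part2.
exact: part3.
Qed.
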